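(* $E_3<_{\mathrm{Learn}}\mathbf{PL}$: every $E_3$-learnable family of structures is $\mathbf{PL}$-learnable, and there is a $\mathbf{PL}$-learnable family that is not $E_3$-learnable.
   Context: All structures are countable, have domain $\mathbb{N}$, are in a finite relational signature, and are identified with their atomic diagrams (elements of $2^{\mathbb{N}}$). A family of structures $\mathfrak{K}$ is a countable set of pairwise nonisomorphic such structures; $\mathcal{S}\restriction_s$ is the finite substructure on $\{0,\dots,s\}$; $\mathrm{LD}(\mathfrak{K})\subseteq2^{\mathbb{N}}$ is the set of structures with domain $\mathbb{N}$ isomorphic to a member of $\mathfrak{K}$ (subspace topology). For an equivalence relation $E$ on a space $X$, $\mathfrak{K}$ is $E$-learnable if there is a continuous $\Gamma:\mathrm{LD}(\mathfrak{K})\to X$ with $\mathcal{S}\cong\mathcal{S}'\iff\Gamma(\mathcal{S})E\Gamma(\mathcal{S}')$ on $\mathrm{LD}(\mathfrak{K})$. Fix a computable bijection $\langle\cdot,\cdot\rangle:\mathbb{N}^2\to\mathbb{N}$; $p^{[m]}(n)=p(\langle m,n\rangle)$ for $p\in\mathbb{N}^{\mathbb{N}\times\mathbb{N}}$; $p\,E_0\,q\iff\exists m\forall n\ge m\ p(n)=q(n)$; $p\,E_3\,q\iff\forall m\ p^{[m]}E_0q^{[m]}$. A learner is an arbitrary function from $\{\mathcal{S}\restriction_s:\mathcal{S}\in\mathrm{LD}(\mathfrak{K})\}$ to $\{\ulcorner\mathcal{A}\urcorner:\mathcal{A}\in\mathfrak{K}\}\cup\{?\}$. $\mathfrak{K}$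 is $\mathbf{PL}$-learnable if some learner $\mathbf{M}$ satisfies: for every $\mathcal{S}\in\mathrm{LD}(\mathfrak{K})$ and $\mathcal{A}\in\mathfrak{K}$, $\{n:\mathbf{M}(\mathcal{S}\restriction_n)=\ulcorner\mathcal{A}\urcorner\}$ is infinite iff $\mathcal{A}\cong\mathcal{S}$. $X<_{\mathrm{Learn}}Y$ means every $X$-learnable family is $Y$-learnable but not conversely. *)

(* Defs.v *)
From mathcomp Require Import all_boot.
From Stdlib Require Cantor.
Set Implicit Arguments. Unset Strict Implicit. Unset Printing Implicit Defensive.

(* A structure with domain nat in this signature: its relations, i.e. exactly
   the data of its atomic diagram. *)
Definition structure (k : nat) (ar : 'I_k -> nat) : Type :=
  forall i : 'I_k, ('I_(ar i) -> nat) -> bool.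

Section Learn.
Variables (k : nat) (ar : 'I_k -> nat).
Local Notation str := (structure ar).

Definition iso (A B : str) : Prop :=
  exists f : nat -> nat, bijective f /\
    forall (i : 'I_k) (t : 'I_(ar i) -> nat), A i t = B i (f \o t).

Definition restr_eq (s : nat) (A B : str) : Prop :=
  forall (i : 'I_k) (t : 'I_(ar i) -> nat), (forall j, t j <= s) -> A i t = B i t.

Definition is_family (I : countType) (K : I -> str) : Prop :=
  forall a b : I, iso (K a) (K b) -> a = b.

Definition LD (I : countType) (K : I -> str) (A : str) : Prop :=
  exists a : I, iso A (K a).

(* Continuity of G : LD(K) -> nat^nat, LD(K) carrying the subspace topology of
   Cantor space of atomic diagrams (basic open sets: {A | A|_s = sigma}) and
   nat^nat the Baire space topology. *)
Definition continuous_on_LD (I : countType) (K : I -> str)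
    (G : str -> (nat -> nat)) : Prop :=
  forall A, LD K A -> forall n : nat, exists s : nat,
    forall B, LD K B -> restr_eq s A B -> G B n = G A n.

Definition E_learnable (E : (nat -> nat) -> (nat -> nat) -> Prop)
    (I : countType) (K : I -> str) : Prop :=
  exists G : str -> (nat -> nat), continuous_on_LD K G /\
    forall A B, LD K A -> LD K B -> (iso A B <-> E (G A) (G B)).

(* A learner: M s A is the learner's output on the finite structure A|_s
   (Some a = the code of K a, None = '?'); it may depend only on A|_s. *)
Definition is_learner (I : countType) (M : nat -> str -> option I) : Prop :=
  forall s A B, restr_eq s A B -> M s A = M s B.

Definition PL_learnable (I : countType) (K : I -> str) : Prop :=
  exists M : nat -> str -> option I, is_learner M /\
    forall A, LD K A -> forall a : I,
      ((forall m, exists2 n, m <= n & M n A = Some a) <-> iso (K a) A).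

End Learn.

Definition pair (m n : nat) : nat := Cantor.to_nat (m, n).
Definition column (p : nat -> nat) (m : nat) : nat -> nat := fun n => p (pair m n).

Definition E0 (p q : nat -> nat) : Prop := exists m, forall n, m <= n -> p n = q n.
Definition E3 (p q : nat -> nat) : Prop := forall m, E0 (column p m) (column q m).

(* Main.v *)
From Stdlib Require Import Cantor ClassicalEpsilon FunctionalExtensionality Classical.
Require Import Defs.
From mathcomp Require Import all_boot zify.
Set Implicit Arguments. Unset Strict Implicit. Unset Printing Implicit Defensive.


Lemma ex_least (P : nat -> Prop) : (exists n, P n) -> exists n, P n /\ forall m, m < n -> ~ P m.
Proof.
move=> [n Pn]; apply: NNPP => hno.
have H : forall j, forall m, m <= j -> ~ P m.
  elim=> [|j IH] m hm Pm.
  - apply: hno; exists m; split=> // m' hm'; exfalso; lia.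
  - apply: hno; exists m; split=> // m' hm' Pm'; apply: (IH m') => //; lia.
exact: (H n n (leqnn n) Pn).
Qed.

Lemma tn_ge x y : x <= Cantor.to_nat (x, y) /\ y <= Cantor.to_nat (x, y).
Proof. have h := Cantor.to_nat_non_decreasing x y; split; lia. Qed.

Lemma of_natE s i v : Cantor.of_nat s = (i, v) -> s = Cantor.to_nat (i, v).
Proof. by move=> E; rewrite -E Cantor.cancel_to_of. Qed.

Lemma E0_refl p : E0 p p. Proof. by exists 0. Qed.
Lemma E0_sym p q : E0 p q -> E0 q p.
Proof. by case=> m h; exists m => n hn; rewrite h. Qed.
Lemma E0_trans p q r : E0 p q -> E0 q r -> E0 p r.
Proof.
case=> m1 h1 [m2 h2]; exists (maxn m1 m2) => n hn.
rewrite h1 ?h2 //; lia.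
Qed.
Lemma notE0 p q : ~ E0 p q -> forall N, exists n, N <= n /\ p n <> q n.
Proof.
move=> h N; apply: NNPP => h2; apply: h; exists N => n hn.
apply: NNPP => h3; apply: h2; by exists n.
Qed.

Section Gen.
Variables (k : nat) (ar : 'I_k -> nat).
Local Notation str := (structure ar).

Lemma restr_eq_refl s (A : str) : restr_eq s A A. Proof. by move=> i t _. Qed.
Lemma restr_eq_sym s (A B : str) : restr_eq s A B -> restr_eq s B A.
Proof. by move=> h i t ht; rewrite h. Qed.
Lemma restr_eq_trans s (A B C : str) : restr_eq s A B -> restr_eq s B C -> restr_eq s A C.
Proof. by move=> h1 h2 i t ht; rewrite h1 // h2. Qed.
Lemma restr_eq_mono s s' (A B : str) : s <= s' -> restr_eq s' A B -> restr_eq s A B.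
Proof. move=> hs h i t ht; apply: h => j; exact: leq_trans (ht j) hs. Qed.

Lemma iso_refl (A : str) : iso A A.
Proof. exists id; split; first by exists id. by move=> i t. Qed.

Lemma iso_sym (A B : str) : iso A B -> iso B A.
Proof.
case=> f [[g fK gK] h]; exists g; split; first by exists f.
move=> i t; rewrite h; congr (B i _); apply: functional_extensionality => x /=.
by rewrite gK.
Qed.

Lemma iso_trans (A B C : str) : iso A B -> iso B C -> iso A C.
Proof.
case=> f [bf h1] [g [bg h2]]; exists (g \o f); split; first exact: bij_comp.
by move=> i t; rewrite h1 h2.
Qed.

Section PL.
Variables (I : countType) (K : I -> str).
Variable Req : I -> nat -> nat -> str -> Prop.
Hypothesis R1 : forall a r u A B, restr_eq u A B -> Req a r u A -> Req a r u B.
Hypothesis R2 : forall a r u v A, u <= v -> Req a r u A -> Req a r v A.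
Hypothesis R3 : forall A, LD K A -> forall a, iso (K a) A <-> forall r, exists u, Req a r u A.

Definition Wt a t u A := forall r, r < t -> Req a r u A.
Definition good a t u A := Wt a t u A /\ forall u', u' < u -> ~ Wt a t u' A.

Definition Mlearn (s : nat) (A : str) : option I :=
  let (i, v) := Cantor.of_nat s in
  let (t, u) := Cantor.of_nat v in
  match pickle_inv i with
  | Some a => if excluded_middle_informative (good a t u A) then Some a else None
  | None => None end.

Lemma Wt_ev a A t : (forall r, exists u, Req a r u A) ->
  exists u0, forall u, u0 <= u -> Wt a t u A.
Proof.
move=> H; elim: t => [|t [u0 IH]]; first by exists 0 => u _ r.
case: (H t) => u1 h1; exists (maxn u0 u1) => u hu r hr.
case: (ltngtP r t) => hrt.
- apply: IH => //; lia.
- lia.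
- subst r; apply: R2 h1; lia.
Qed.

Lemma good_uniq a t u u' A : good a t u A -> good a t u' A -> u = u'.
Proof.
case=> h1 h2 [h1' h2']; case: (ltngtP u u') => // h.
- by case: (h2' _ h).
- by case: (h2 _ h).
Qed.

Lemma bound_good a A (g : nat -> nat -> nat) T :
  exists B, forall t u, t < T -> good a t u A -> g t u <= B.
Proof.
elim: T => [|T [B IH]]; first by exists 0.
case: (classic (exists u, good a T u A)) => [[u hu]|hno].
- exists (maxn B (g T u)) => t u' ht hg.
  case: (ltngtP t T) => htT.
  + have := IH t u' htT hg; lia.
  + lia.
  + subst t; rewrite (good_uniq hg hu); lia.
- exists B => t u' ht hg; case: (ltngtP t T) => htT.
  + exact: IH.
  + lia.
  + subst t; case: hno; by exists u'.
Qed.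

Lemma GD_PL : PL_learnable K.
Proof.
exists Mlearn; split.
- move=> s A B hAB; rewrite /Mlearn.
  case E1: (Cantor.of_nat s) => [i v]; case E2: (Cantor.of_nat v) => [t u].
  case: (pickle_inv i) => [a|] //.
  have hs : u <= s.
    rewrite (of_natE E1) (of_natE E2); have := tn_ge i (Cantor.to_nat (t, u)).
    have := tn_ge t u; lia.
  have hW : forall u', u' <= u -> (Wt a t u' A <-> Wt a t u' B).
    move=> u' hu'; have hr : restr_eq u' A B by apply: restr_eq_mono hAB; lia.
    split=> h r hr'.
    + exact: R1 hr (h r hr').
    + exact: R1 (restr_eq_sym hr) (h r hr').
  have hg : good a t u A <-> good a t u B.
    rewrite /good; split=> [[h1 h2]|[h1 h2]]; split.
    + by apply/hW.
    + move=> u' hu' h3; apply: (h2 u' hu'); apply/hW => //; lia.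
    + by apply/hW.
    + move=> u' hu' h3; apply: (h2 u' hu'); apply/hW => //; lia.
  do 2 case: excluded_middle_informative => //.
  + by move=> h1 h2; case: h1; apply/hg.
  + by move=> h1 h2; case: h2; apply/hg.
- move=> A hA a; split.
  + move=> hinf; apply: NNPP => hni.
    have [r0 hr0] : exists r0, forall u, ~ Req a r0 u A.
      apply: NNPP => h; apply: hni; apply/(R3 hA) => r.
      apply: NNPP => h2; apply: h; exists r => u hu; apply: h2; by exists u.
    have [B hB] := bound_good a A (fun t u => Cantor.to_nat (pickle a, Cantor.to_nat (t, u))) r0.+1.
    case: (hinf B.+1) => n hn; rewrite /Mlearn.
    case E1: (Cantor.of_nat n) => [i v]; case E2: (Cantor.of_nat v) => [t u].
    case E3: (pickle_inv i) => [a'|] //.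
    case: excluded_middle_informative => // hgd [ea]; subst a'.
    have ei : i = pickle a by rewrite -(@pickle_invK I i) E3.
    have htr : t < r0.+1.
      case: (leqP t r0) => // h; case: (hr0 u); apply: hgd.1; lia.
    have := hB t u htr hgd; rewrite -ei -(of_natE E2) -(of_natE E1); lia.
  + move=> hiso m; have H := proj1 (R3 hA a) hiso.
    case: (Wt_ev m H) => u0 hu0.
    case: (@ex_least (fun u => Wt a m u A)); first by exists u0; apply: hu0.
    move=> u [h1 h2].
    exists (Cantor.to_nat (pickle a, Cantor.to_nat (m, u))).
      have := tn_ge (pickle a) (Cantor.to_nat (m, u)); have := tn_ge m u; lia.
    rewrite /Mlearn !Cantor.cancel_of_to pickleK_inv.
    case: excluded_middle_informative => // hn; case: hn; by split.
Qed.
End PL.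
End Gen.


Section Part1.
Variables (k : nat) (ar : 'I_k -> nat).
Local Notation str := (structure ar).
Variables (I : countType) (K : I -> str).
Hypothesis fam : is_family K.
Variable G : str -> nat -> nat.
Hypothesis Gc : continuous_on_LD K G.
Hypothesis Gr : forall A B, LD K A -> LD K B -> (iso A B <-> E3 (G A) (G B)).

Lemma LD_K a : LD K (K a). Proof. exists a; exact: iso_refl. Qed.

Definition mab a b := epsilon (inhabits 0)
  (fun m => ~ E0 (column (G (K a)) m) (column (G (K b)) m)).

Lemma mabP a b : a <> b -> ~ E0 (column (G (K a)) (mab a b)) (column (G (K b)) (mab a b)).
Proof.
move=> hab; rewrite /mab.
apply: (epsilon_spec (inhabits 0) (fun m => ~ E0 (column (G (K a)) m) (column (G (K b)) m))).
apply: NNPP => h; apply: hab; apply: fam.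
apply: (proj2 (Gr (LD_K a) (LD_K b))) => m; apply: NNPP => h2; apply: h; by exists m.
Qed.

Definition Det x c u (A : str) := forall B, LD K B -> restr_eq u A B -> G B x = c.

Definition Req1 a r u (A : str) :=
  let (j, N) := Cantor.of_nat r in
  forall b, pickle_inv j = Some b -> b <> a ->
    exists n, N <= n /\ exists c, c <> G (K b) (pair (mab a b) n) /\ Det (pair (mab a b) n) c u A.

Lemma Req1_R1 a r u A B : restr_eq u A B -> Req1 a r u A -> Req1 a r u B.
Proof.
move=> hAB; rewrite /Req1; case: (Cantor.of_nat r) => j N h b hb hba.
case: (h b hb hba) => n [hn [c [hc hd]]]; exists n; split=> //; exists c; split=> //.
move=> B' hB' hr; apply: hd => //; exact: restr_eq_trans hAB hr.
Qed.

Lemma Req1_R2 a r u v A : u <= v -> Req1 a r u A -> Req1 a r v A.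
Proof.
move=> huv; rewrite /Req1; case: (Cantor.of_nat r) => j N h b hb hba.
case: (h b hb hba) => n [hn [c [hc hd]]]; exists n; split=> //; exists c; split=> //.
move=> B' hB' hr; apply: hd => //; exact: restr_eq_mono huv hr.
Qed.

Lemma Req1_R3 A : LD K A -> forall a, iso (K a) A <-> forall r, exists u, Req1 a r u A.
Proof.
move=> hA a; split.
- move=> hiso r; rewrite /Req1; case E: (Cantor.of_nat r) => [j N].
  case hj: (pickle_inv j) => [b|]; last by exists 0 => b.
  case: (classic (b = a)) => [->|hba]; first by exists 0 => b' [<-].
  set m := mab a b.
  have h3 : E3 (G A) (G (K a)) by apply: (proj1 (Gr hA (LD_K a))); exact: iso_sym.
  have hne : ~ E0 (column (G A) m) (column (G (K b)) m).
    move=> h; apply: (@mabP a b (fun e => hba (esym e))); exact: E0_trans (E0_sym (h3 m)) h.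
  case: (notE0 hne N) => n [hn hneq].
  case: (Gc hA (pair m n)) => s hs.
  exists s => b' [<-] _.
  exists n; split=> //; exists (G A (pair m n)); split; first exact: hneq.
  move=> B hB hr; exact: hs.
- move=> Hall; case: hA => b hb; case: (classic (b = a)) => [<-|hba].
    exact: iso_sym.
  have hA : LD K A by exists b.
  have h3 : E3 (G A) (G (K b)) by apply: (proj1 (Gr hA (LD_K b))).
  set m := mab a b.
  case: (h3 m) => N0 hN0.
  case: (Hall (Cantor.to_nat (pickle b, N0))) => u; rewrite /Req1 Cantor.cancel_of_to.
  move=> /(_ b (pickleK_inv b) hba) [n [hn [c [hc hd]]]].
  have := hd A hA (@restr_eq_refl _ _ u A); have := hN0 n hn; rewrite /column => -> h.
  by case: hc.
Qed.

End Part1.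

Theorem part1 (k : nat) (ar : 'I_k -> nat) (I : countType) (K : I -> structure ar) :
  is_family K -> E_learnable E3 K -> PL_learnable K.
Proof.
move=> fam [G [Gc Gr]].
apply: (@GD_PL _ _ _ K (Req1 K G)).
- exact: Req1_R1.
- exact: Req1_R2.
- exact: Req1_R3.
Qed.


Definition asb (P : Prop) : bool := if excluded_middle_informative P then true else false.
Lemma asbP (P : Prop) : reflect P (asb P).
Proof. rewrite /asb; case: excluded_middle_informative => h; by constructor. Qed.

Definition ar4 : 'I_4 -> nat := fun _ => 2.
Definition o0 : 'I_2 := @Ordinal 2 0 isT.
Definition o1 : 'I_2 := @Ordinal 2 1 isT.

Record pre := Pre { pcol : nat -> nat; prel : nat -> nat -> bool }.

Definition mk (Z : pre) : structure ar4 :=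
  fun i t => if val i < 3 then pcol Z (t o0) == val i else prel Z (t o0) (t o1).

Section Kinds.
Variable Z : pre.
Definition matched x : bool := asb (exists w, prel Z x w).
Definition kd x : nat :=
  if pcol Z x == 1 then 0 else if pcol Z x == 2 then 5 else
  if pcol Z x == 0 then (if matched x then 1 else 2) else (if matched x then 3 else 4).
Definition rkc (c z : nat) := count (fun y => kd y == c) (iota 0 z).
Definition rk x := rkc (kd x) x.

Lemma rkcS c z : rkc c z.+1 = rkc c z + (kd z == c).
Proof. by rewrite /rkc -addn1 iotaD count_cat /= addn0. Qed.

Lemma rkc_mono c z z' : z <= z' -> rkc c z <= rkc c z'.
Proof.
move=> h; rewrite -(subnKC h); elim: (z' - z) => [|d IH]; first by rewrite addn0.
rewrite addnS rkcS; lia.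
Qed.

Lemma rk_lt x z : x < z -> rk x < rkc (kd x) z.
Proof.
move=> h; rewrite /rk; have := rkc_mono (kd x) h; rewrite rkcS eqxx /=; lia.
Qed.

Lemma rk_inj x y : kd x = kd y -> rk x = rk y -> x = y.
Proof.
move=> hk hr; case: (ltngtP x y) => // h.
- have h1 := rk_lt h; rewrite /rk hk in h1 hr; rewrite hr in h1; lia.
- have h1 := rk_lt h; rewrite /rk -hk in h1 hr; rewrite hr in h1; lia.
Qed.

Lemma rk_below c z r : r < rkc c z -> exists x, x < z /\ kd x = c /\ rk x = r.
Proof.
elim: z => [|z IH] //; rewrite rkcS => h.
case: (ltnP r (rkc c z)) => h2.
- case: (IH h2) => x [hx [hk hr]]; exists x; split=> //; lia.
- case E: (kd z == c) h => h; last by rewrite addn0 in h; lia.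
  exists z; split=> //; move/eqP: E => E; split=> //; rewrite /rk E; lia.
Qed.

Lemma rk_inf c : (forall M, exists x, M <= x /\ kd x = c) -> forall r, exists x, kd x = c /\ rk x = r.
Proof.
move=> H r.
have [z hz] : exists z, r < rkc c z.
  elim: r => [|r [z hz]].
  - case: (H 0) => x [_ hx]; exists x.+1; rewrite rkcS hx eqxx /=; lia.
  - case: (H z) => x [hzx hx]; exists x.+1; rewrite rkcS hx eqxx /=.
    have := rkc_mono c hzx; lia.
case: (rk_below hz) => x [_ h]; by exists x.
Qed.
End Kinds.

Definition pwf (Z : pre) b :=
  (forall x, x < b -> pcol Z x <= 3) /\
  (forall x, x < b -> pcol Z x = 2 -> exists2 e, e < x & prel Z e x) /\
  (forall x w, x < b -> w < b -> prel Z x w -> (pcol Z x == 0) || (pcol Z x == 3)) /\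
  (forall x w, x < b -> w < b -> prel Z x w -> pcol Z w = 2) /\
  (forall x w w', x < b -> w < b -> w' < b -> prel Z x w -> prel Z x w' -> w = w') /\
  (forall x x' w, x < b -> x' < b -> w < b -> prel Z x w -> prel Z x' w -> x = x').
Definition WF Z := forall b, pwf Z b.

Section WFfacts.
Variable Z : pre.
Hypothesis wf : WF Z.
Lemma wf_col x : pcol Z x <= 3. Proof. by case: (wf x.+1) => h _; apply: h. Qed.
Lemma wf_part x : pcol Z x = 2 -> exists2 e, e < x & prel Z e x.
Proof. by case: (wf x.+1) => _ [h _]; apply: h. Qed.
Lemma wf_base x w : prel Z x w -> (pcol Z x == 0) || (pcol Z x == 3).
Proof. move=> h; case: (wf (maxn x w).+1) => _ [_ [H _]]; apply: H h; lia. Qed.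
Lemma wf_W x w : prel Z x w -> pcol Z w = 2.
Proof. move=> h; case: (wf (maxn x w).+1) => _ [_ [_ [H _]]]; apply: H h; lia. Qed.
Lemma wf_u1 x w w' : prel Z x w -> prel Z x w' -> w = w'.
Proof. move=> h h'; case: (wf (maxn x (maxn w w')).+1) => _ [_ [_ [_ [H _]]]]; apply: H h h'; lia. Qed.
Lemma wf_u2 x x' w : prel Z x w -> prel Z x' w -> x = x'.
Proof. move=> h h'; case: (wf (maxn w (maxn x x')).+1) => _ [_ [_ [_ [_ H]]]]; apply: H h h'; lia. Qed.

Lemma kd_col x : pcol Z x = match kd Z x with 0 => 1 | 1 | 2 => 0 | 5 => 2 | _ => 3 end.
Proof.
rewrite /kd; have := wf_col x.
case: (pcol Z x) => [|[|[|[|c]]]] //= _; by case: (matched Z _).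
Qed.

Lemma kd5 x : (kd Z x == 5) = (pcol Z x == 2).
Proof. rewrite /kd; case: (pcol Z x) => [|[|[|c]]] //=; by case: (matched Z _). Qed.

Lemma kd_lt5 x : pcol Z x <> 2 -> kd Z x < 5.
Proof. rewrite /kd; case: (pcol Z x) => [|[|[|c]]] //= _; by case: (matched Z _). Qed.

Lemma kd_matched x w : prel Z x w -> (kd Z x == 1) || (kd Z x == 3).
Proof.
move=> h; have hb := wf_base h; have hm : matched Z x by apply/asbP; exists w.
rewrite /kd hm; case/orP: hb => /eqP -> //.
Qed.

Lemma matched_kd x : (kd Z x == 1) || (kd Z x == 3) -> exists w, prel Z x w.
Proof.
rewrite /kd; case E: (matched Z x); first by move=> _; apply/asbP.
by case: (pcol Z x) => [|[|[|c]]].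
Qed.
End WFfacts.

Section KindIso.
Variables Z Z' : pre.
Hypothesis wf : WF Z.
Hypothesis wf' : WF Z'.
Hypothesis H : forall c r, c < 5 ->
  (exists x, kd Z x = c /\ rk Z x = r) -> (exists x, kd Z' x = c /\ rk Z' x = r).

Definition fb x := epsilon (inhabits 0) (fun x' => kd Z' x' = kd Z x /\ rk Z' x' = rk Z x).
Definition ptZ w := epsilon (inhabits 0) (fun e => prel Z e w).
Definition wof' e := epsilon (inhabits 0) (fun w => prel Z' e w).
Definition Fm x := if kd Z x == 5 then wof' (fb (ptZ x)) else fb x.

Lemma fbP x : kd Z x < 5 -> kd Z' (fb x) = kd Z x /\ rk Z' (fb x) = rk Z x.
Proof.
move=> h; rewrite /fb.
apply: (epsilon_spec (inhabits 0) (fun x' => kd Z' x' = kd Z x /\ rk Z' x' = rk Z x)).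
apply: H => //; by exists x.
Qed.

Lemma ptZP w : pcol Z w = 2 -> prel Z (ptZ w) w.
Proof.
move=> h; rewrite /ptZ; apply: (epsilon_spec (inhabits 0) (fun e => prel Z e w)).
case: (wf_part wf h) => e _ he; by exists e.
Qed.

Lemma wofP e : (exists w, prel Z' e w) -> prel Z' e (wof' e).
Proof. move=> h; rewrite /wof'; exact: (epsilon_spec (inhabits 0) (fun w => prel Z' e w)). Qed.

Lemma FmW x : pcol Z x = 2 -> prel Z' (fb (ptZ x)) (Fm x) /\ Fm x = wof' (fb (ptZ x)).
Proof.
move=> hx; have h5 : kd Z x == 5 by rewrite kd5 hx.
rewrite /Fm h5; split=> //; apply: wofP; apply: matched_kd => //.
have hp := ptZP hx; have hk := kd_matched wf hp.
have hl : kd Z (ptZ x) < 5 by case/orP: hk => /eqP ->.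
by rewrite (fbP hl).1.
Qed.

Lemma Fm_kd x : kd Z' (Fm x) = kd Z x.
Proof.
case: (boolP (pcol Z x == 2)) => /eqP hx.
- have [h1 _] := FmW hx; have := wf_W wf' h1 => /eqP; rewrite -kd5 // => /eqP ->.
  by apply/esym/eqP; rewrite kd5 // hx.
- have hl := kd_lt5 hx; have h5 : kd Z x != 5 by case: (kd Z x) hl => [|[|[|[|[|]]]]].
  rewrite /Fm (negbTE h5); exact: (fbP hl).1.
Qed.

Lemma Fm_col x : pcol Z' (Fm x) = pcol Z x.
Proof. by rewrite (kd_col wf' (Fm x)) (kd_col wf x) Fm_kd. Qed.
End KindIso.

Lemma Fm_cancel (Z Z' : pre) (wf : WF Z) (wf' : WF Z')
  (H : forall c r, c < 5 -> (exists x, kd Z x = c /\ rk Z x = r) -> (exists x, kd Z' x = c /\ rk Z' x = r))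
  (H' : forall c r, c < 5 -> (exists x, kd Z' x = c /\ rk Z' x = r) -> (exists x, kd Z x = c /\ rk Z x = r)) :
  cancel (Fm Z Z') (Fm Z' Z).
Proof.
have base : forall x, kd Z x < 5 -> Fm Z' Z (fb Z Z' x) = x.
  move=> x hl; have [k1 r1] := fbP H hl.
  have hl' : kd Z' (fb Z Z' x) < 5 by rewrite k1.
  have h5 : kd Z' (fb Z Z' x) != 5 by case: (kd Z' _) hl' => [|[|[|[|[|]]]]].
  rewrite /Fm (negbTE h5); have [k2 r2] := fbP H' hl'.
  apply: (@rk_inj Z); first by rewrite k2 k1.
  by rewrite r2 r1.
move=> x; case: (boolP (pcol Z x == 2)) => /eqP hx.
- have [h1 h2] := FmW wf H hx.
  have hw : pcol Z' (Fm Z Z' x) = 2 by exact: (wf_W wf' h1).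
  have [g1 g2] := FmW wf' H' hw.
  rewrite g2.
  have e1 : ptZ Z' (Fm Z Z' x) = fb Z Z' (ptZ Z x).
    apply: (wf_u2 wf' (ptZP wf' hw)) h1.
  have hp := ptZP wf hx; have hk := kd_matched wf hp.
  have hl : kd Z (ptZ Z x) < 5 by case/orP: hk => /eqP ->.
  have e2 : fb Z' Z (fb Z Z' (ptZ Z x)) = ptZ Z x.
    have := base _ hl; rewrite /Fm.
    have hl' : kd Z' (fb Z Z' (ptZ Z x)) < 5 by rewrite (fbP H hl).1.
    have h5 : kd Z' (fb Z Z' (ptZ Z x)) != 5 by case: (kd Z' _) hl' => [|[|[|[|[|]]]]].
    by rewrite (negbTE h5).
  rewrite e1 e2; apply: (wf_u1 wf _ hp); apply: wofP; by exists x.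
- have hl := kd_lt5 hx; have h5 : kd Z x != 5 by case: (kd Z x) hl => [|[|[|[|[|]]]]].
  rewrite [Fm Z Z' x]/Fm (negbTE h5); exact: base.
Qed.

Lemma kind_iso (Z Z' : pre) : WF Z -> WF Z' ->
  (forall c r, c < 5 -> (exists x, kd Z x = c /\ rk Z x = r) <-> (exists x, kd Z' x = c /\ rk Z' x = r)) ->
  iso (mk Z) (mk Z').
Proof.
move=> wf wf' Hiff.
have H : forall c r, c < 5 -> (exists x, kd Z x = c /\ rk Z x = r) -> (exists x, kd Z' x = c /\ rk Z' x = r).
  by move=> c r hc; case: (Hiff c r hc).
have H' : forall c r, c < 5 -> (exists x, kd Z' x = c /\ rk Z' x = r) -> (exists x, kd Z x = c /\ rk Z x = r).
  by move=> c r hc; case: (Hiff c r hc).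
have c1 := Fm_cancel wf wf' H H'.
have c2 := Fm_cancel wf' wf H' H.
exists (Fm Z Z'); split; first by exists (Fm Z' Z).
move=> i t; rewrite /mk /=.
case: ifP => _; first by rewrite (Fm_col wf wf' H).
set a := t o0; set b := t o1.
apply/idP/idP => h.
- have hb := wf_W wf h.
  have [h1 _] := FmW wf H hb.
  have ea : ptZ Z b = a by apply: (wf_u2 wf (ptZP wf hb)) h.
  rewrite -ea; suff -> : Fm Z Z' (ptZ Z b) = fb Z Z' (ptZ Z b) by [].
  have hk := kd_matched wf (ptZP wf hb).
  have h5 : kd Z (ptZ Z b) != 5 by case/orP: hk => /eqP ->.
  by rewrite /Fm (negbTE h5).
- have hb' := wf_W wf' h.
  have hb : pcol Z b = 2 by rewrite -(Fm_col wf wf' H).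
  have [h1 _] := FmW wf H hb.
  have e1 := wf_u2 wf' h h1.
  have hk := kd_matched wf (ptZP wf hb).
  have h5 : kd Z (ptZ Z b) != 5 by case/orP: hk => /eqP ->.
  have e2 : Fm Z Z' (ptZ Z b) = fb Z Z' (ptZ Z b) by rewrite /Fm (negbTE h5).
  have : a = ptZ Z b by apply: (can_inj c1); rewrite e1 e2.
  move=> ->; exact: ptZP.
Qed.


Lemma WF_of (Z : pre) :
  (forall x, pcol Z x <= 3) ->
  (forall x, pcol Z x = 2 -> exists2 e, e < x & prel Z e x) ->
  (forall x w, prel Z x w -> (pcol Z x == 0) || (pcol Z x == 3)) ->
  (forall x w, prel Z x w -> pcol Z w = 2) ->
  (forall x w w', prel Z x w -> prel Z x w' -> w = w') ->
  (forall x x' w, prel Z x w -> prel Z x' w -> x = x') -> WF Z.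
Proof.
move=> h1 h2 h3 h4 h5 h6 b; split; first by move=> x _; exact: h1.
split; first by move=> x _; exact: h2.
split; first by move=> x w _ _; exact: h3.
split; first by move=> x w _ _; exact: h4.
split; first by move=> x w w' _ _ _; exact: h5.
by move=> x x' w _ _ _; exact: h6.
Qed.

Definition pat (r : nat) : nat :=
  match r with 0 => 0 | 1 => 2 | 2 => 0 | 3 => 3 | 4 => 2 | _ => 3 end.
Definition relpat (r : nat) : bool := (r == 0) || (r == 3).

Lemma pat_le r : pat r <= 3. Proof. by case: r => [|[|[|[|[|[|r]]]]]]. Qed.
Lemma pat_ne1 r : pat r != 1. Proof. by case: r => [|[|[|[|[|[|r]]]]]]. Qed.
Lemma pat_rel r : relpat r -> (pat r == 0) || (pat r == 3).
Proof. by case: r => [|[|[|[|[|[|r]]]]]]. Qed.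
Lemma pat_relS r : relpat r -> pat r.+1 = 2.
Proof. by case: r => [|[|[|[|[|[|r]]]]]]. Qed.
Lemma pat_W r : r < 6 -> pat r = 2 -> (r == 1) || (r == 4).
Proof. by case: r => [|[|[|[|[|[|r]]]]]]. Qed.

Definition ext (Z : pre) (b e : nat) : pre :=
  Pre (fun x => if x < b then pcol Z x else if x < b + e then 1 else pat ((x - (b + e)) %% 6))
      (fun x w => if x < b then (w < b) && prel Z x w
                  else (b + e <= x) && relpat ((x - (b + e)) %% 6) && (w == x.+1)).

Section Ext.
Variables (Z : pre) (b e : nat).
Hypothesis pw : pwf Z b.
Local Notation X := (ext Z b e).

Lemma ext_WF : WF X.
Proof.
case: pw => p1 [p2 [p3 [p4 [p5 p6]]]].
apply: WF_of => /=.
- move=> x; case: ifP => hb; first exact: p1.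
  case: ifP => // _; exact: pat_le.
- move=> x; case: ifP => hb.
  + move=> h; case: (p2 x hb h) => y hy hr; exists y => //.
    have hyb : y < b by lia.
    by rewrite hyb hr.
  + case: ifP => // hbe h.
    have hr := pat_W (@ltn_pmod (x - (b + e)) 6 isT) h.
    exists x.-1; first by case/orP: hr => /eqP; lia.
    have -> : (x.-1 < b) = false by case/orP: hr => /eqP; lia.
    apply/andP; split; last by apply/eqP; case/orP: hr => /eqP; lia.
    apply/andP; split; first by case/orP: hr => /eqP; lia.
    by rewrite /relpat; case/orP: hr => /eqP ?; apply/orP; [left|right]; apply/eqP; lia.
- move=> x w; case: ifP => hb; first by case/andP=> hw h; exact: p3 h.
  case/andP => /andP [h1 h2] _; have -> : (x < b + e) = false by lia.
  exact: pat_rel.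
- move=> x w; case: ifP => hb; first by case/andP=> hw h; rewrite hw; exact: p4 h.
  case/andP => /andP [h1 h2] /eqP ->; have -> : (x.+1 < b) = false by lia.
  have -> : (x.+1 < b + e) = false by lia.
  have -> : (x.+1 - (b + e)) %% 6 = ((x - (b + e)) %% 6).+1.
    by move: h2; rewrite /relpat; case/orP => /eqP; lia.
  exact: pat_relS.
- move=> x w w'; case: ifP => hb.
  + by case/andP => hw h /andP [hw' h']; exact: p5 h h'.
  + by case/andP => _ /eqP -> /andP [_ /eqP ->].
- move=> x x' w; case: ifP => hb; case: ifP => hb'.
  + by case/andP => hw h /andP [hw' h']; exact: p6 h h'.
  + by case/andP => hw _ /andP [/andP [h1 _] /eqP h3]; lia.
  + by case/andP => /andP [h1 _] /eqP h3 /andP [hw _]; lia.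
  + by case/andP => _ /eqP -> /andP [_ /eqP]; lia.
Qed.

Lemma ext_lab q j : j < 6 -> ((b + e + 6 * q + j) - (b + e)) %% 6 = j.
Proof. move=> hj; lia. Qed.

Lemma ext_col_new q j : j < 6 -> pcol X (b + e + 6 * q + j) = pat j.
Proof.
move=> hj /=; have -> : (b + e + 6 * q + j < b) = false by lia.
have -> : (b + e + 6 * q + j < b + e) = false by lia.
by rewrite ext_lab.
Qed.

Lemma ext_rel_new q j w : j < 6 -> prel X (b + e + 6 * q + j) w = relpat j && (w == (b + e + 6 * q + j).+1).
Proof.
move=> hj /=; have -> : (b + e + 6 * q + j < b) = false by lia.
rewrite ext_lab //; have -> : (b + e <= b + e + 6 * q + j) = true by lia.
by [].
Qed.

Lemma ext_kd_new q j : j < 6 -> kd X (b + e + 6 * q + j) =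
  match j with 0 => 1 | 1 => 5 | 2 => 2 | 3 => 3 | 4 => 5 | _ => 4 end.
Proof.
move=> hj; rewrite /kd /matched ext_col_new //.
case: (asbP (exists w, prel X (b + e + 6 * q + j) w)) => hm.
- case: hm => w; rewrite ext_rel_new //.
  by case: j hj => [|[|[|[|[|[|j]]]]]].
- have hm0 : forall j', j' < 6 -> relpat j' -> exists w, prel X (b + e + 6 * q + j') w.
    by move=> j' hj' hr; exists (b + e + 6 * q + j').+1; rewrite ext_rel_new // hr eqxx.
  have := hm0 j hj; case: j hj hm => [|[|[|[|[|[|j]]]]]] //= _ hm h; case: hm; exact: h.
Qed.

Lemma ext_kd_inf c : 1 <= c <= 4 -> forall M, exists x, M <= x /\ kd X x = c.
Proof.
move=> hc M.
have [j [hj hk]] : exists j, j < 6 /\ match j with 0 => 1 | 1 => 5 | 2 => 2 | 3 => 3 | 4 => 5 | _ => 4 end = c.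
  case: c hc => [|[|[|[|[|c]]]]] //= _; [exists 0|exists 2|exists 3|exists 5]; by [].
exists (b + e + 6 * M + j); split; first by lia.
by rewrite ext_kd_new.
Qed.

Definition cntC (Z : pre) n := count (fun y => pcol Z y == 1) (iota 0 n).

Lemma kd0 (Y : pre) x : (kd Y x == 0) = (pcol Y x == 1).
Proof. rewrite /kd; case: (pcol Y x) => [|[|[|c]]] //=; by case: (matched Y x). Qed.

Lemma ext_rkc0 : rkc X 0 (b + e) = cntC Z b + e.
Proof.
rewrite /rkc (eq_count (a2 := fun y => pcol X y == 1)); last by move=> y; rewrite kd0.
rewrite iotaD count_cat /cntC; congr (_ + _).
- apply: eq_in_count => y; rewrite mem_iota /= => hy; rewrite ifT //; lia.
- rewrite (eq_in_count (a2 := predT)); first by rewrite count_predT size_iota.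
  move=> y; rewrite mem_iota /= => hy; rewrite ifF; last by lia.
  rewrite ifT //; lia.
Qed.

Lemma ext_C x : pcol X x = 1 -> x < b + e.
Proof.
rewrite /=; case: ifP => hb; first by lia.
case: ifP => // _ h; by move: (pat_ne1 ((x - (b + e)) %% 6)); rewrite h.
Qed.

Lemma ext_kind0 r : (exists x, kd X x = 0 /\ rk X x = r) <-> r < cntC Z b + e.
Proof.
split.
- case=> x [hk hr]; have hc : pcol X x = 1 by apply/eqP; rewrite -kd0 hk.
  have := rk_lt X (ext_C hc); rewrite hk ext_rkc0 hr //.
- rewrite -ext_rkc0 => h; case: (rk_below h) => x [_ [hk hr]]; by exists x.
Qed.

Lemma ext_kind_all c r : 1 <= c <= 4 -> exists x, kd X x = c /\ rk X x = r.
Proof. move=> hc; exact: rk_inf (ext_kd_inf hc) r. Qed.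
End Ext.


Definition tc (t : bool) := if t then 0 else 3.
Definition nc (t : bool) := if t then 3 else 0.
Definition patT t (r : nat) : nat :=
  match r with 0 => 1 | 1 => tc t | 2 => 2 | 3 => nc t | 4 => 2 | _ => nc t end.
Definition relT (r : nat) : bool := (r == 1) || (r == 3).

Definition Tinf (t : bool) : pre :=
  Pre (fun x => patT t (x %% 6)) (fun x w => relT (x %% 6) && (w == x.+1)).

Lemma Tinf_WF t : WF (Tinf t).
Proof.
have hm : forall x, x %% 6 < 6 by move=> x; exact: (@ltn_pmod x 6 isT).
apply: WF_of => /=.
- move=> x; move: (hm x); case: (x %% 6) => [|[|[|[|[|[|r]]]]]] //= _; by case: t.
- move=> x; move: (hm x); case E: (x %% 6) => [|[|[|[|[|[|r]]]]]] //= _;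
    try by case: t.
  + move=> _; exists x.-1; first by lia.
    apply/andP; split; last by apply/eqP; lia.
    have -> : x.-1 %% 6 = 1 by lia. by [].
  + move=> _; exists x.-1; first by lia.
    apply/andP; split; last by apply/eqP; lia.
    have -> : x.-1 %% 6 = 3 by lia. by [].
- move=> x w; move: (hm x); case: (x %% 6) => [|[|[|[|[|[|r]]]]]] //= _; by case: t.
- move=> x w /andP [h /eqP ->]; move: h; rewrite /relT; case/orP=> /eqP h.
  + by have -> : x.+1 %% 6 = 2 by lia.
  + by have -> : x.+1 %% 6 = 4 by lia.
- by move=> x w w' /andP [_ /eqP ->] /andP [_ /eqP ->].
- by move=> x x' w /andP [_ /eqP ->] /andP [_ /eqP]; lia.
Qed.

Definition kdm (c : nat) := if c == 0 then 1 else 3.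
Definition kds (c : nat) := if c == 0 then 2 else 4.

Lemma Tinf_kd t q j : j < 6 -> kd (Tinf t) (6 * q + j) =
  match j with 0 => 0 | 1 => kdm (tc t) | 2 => 5 | 3 => kdm (nc t) | 4 => 5 | _ => kds (nc t) end.
Proof.
move=> hj; have hr : (6 * q + j) %% 6 = j by lia.
have hmat : matched (Tinf t) (6 * q + j) = relT j.
  apply/asbP/idP => [[w /andP [h _]]|h]; first by rewrite -hr.
  by exists (6 * q + j).+1; rewrite /= hr h eqxx.
rewrite /kd hmat /= hr.
case: j hj {hr hmat} => [|[|[|[|[|[|j]]]]]] //= _; by case: t.
Qed.

Lemma Tinf_kd_none t x : kd (Tinf t) x != kds (tc t).
Proof.
have hj : x %% 6 < 6 by exact: (@ltn_pmod x 6 isT).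
rewrite (divn_eq x 6) mulnC Tinf_kd //.
case: (x %% 6) hj => [|[|[|[|[|[|r]]]]]] //= _; by case: t.
Qed.

Lemma Tinf_kind t c r : c < 5 -> c != kds (tc t) -> exists x, kd (Tinf t) x = c /\ rk (Tinf t) x = r.
Proof.
move=> hc hne; apply: rk_inf => M.
have [j [hj hk]] : exists j, j < 6 /\
  match j with 0 => 0 | 1 => kdm (tc t) | 2 => 5 | 3 => kdm (nc t) | 4 => 5 | _ => kds (nc t) end = c.
  case: t hne; case: c hc => [|[|[|[|[|c]]]]] //= _ _;
  first [exists 0; by [] | exists 1; by [] | exists 3; by [] | exists 5; by []].
exists (6 * M + j); split; first by lia.
by rewrite Tinf_kd.
Qed.

Lemma Tinf_kind_none t r : ~ exists x, kd (Tinf t) x = kds (tc t) /\ rk (Tinf t) x = r.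
Proof. by case=> x [h _]; move: (Tinf_kd_none t x); rewrite h eqxx. Qed.

Definition Z0 : pre := Pre (fun _ => 1) (fun _ _ => false).
Lemma pwf_Z0 : pwf Z0 0. Proof. by do !split. Qed.

Definition Kp (a : nat) : pre :=
  match a with 0 => Tinf true | 1 => Tinf false | n.+2 => ext Z0 0 n end.
Definition KK (a : nat) : structure ar4 := mk (Kp a).

Lemma Kp_WF a : WF (Kp a).
Proof. case: a => [|[|n]]; [exact: Tinf_WF|exact: Tinf_WF|exact: ext_WF pwf_Z0]. Qed.

Definition i0 : 'I_4 := @Ordinal 4 0 isT.
Definition i1 : 'I_4 := @Ordinal 4 1 isT.
Definition i2 : 'I_4 := @Ordinal 4 2 isT.
Definition i3 : 'I_4 := @Ordinal 4 3 isT.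
Definition tup (x y : nat) : 'I_2 -> nat := fun j => if val j == 0 then x else y.

Lemma iso_tup (A B : structure ar4) f : bijective f ->
  (forall (i : 'I_4) (t : 'I_(ar4 i) -> nat), A i t = B i (f \o t)) ->
  forall i x y, A i (tup x y) = B i (tup (f x) (f y)).
Proof.
move=> _ h i x y; rewrite h; congr (B i _); apply: functional_extensionality => j /=.
by rewrite /tup; case: ifP.
Qed.

Lemma restr_tup u (A B : structure ar4) i x y : restr_eq u A B -> x <= u -> y <= u ->
  A i (tup x y) = B i (tup x y).
Proof. move=> h hx hy; apply: h => j; rewrite /tup; by case: ifP. Qed.

Definition Asing (A : structure ar4) :=
  exists x, A i0 (tup x x) /\ forall w, ~~ A i3 (tup x w).
Definition isP (A : structure ar4) x := ~~ A i0 (tup x x) && ~~ A i1 (tup x x) && ~~ A i2 (tup x x).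
Definition Psing (A : structure ar4) := exists x, isP A x /\ forall w, ~~ A i3 (tup x w).
Definition geC (A : structure ar4) j :=
  exists s, [/\ uniq s, size s = j & all (fun x => A i1 (tup x x)) s].

Lemma Asing_iso A B : iso A B -> Asing A -> Asing B.
Proof.
case=> f [bf h] [x [h1 h2]]; have [g fK gK] := bf.
exists (f x); rewrite -(iso_tup bf h); split=> // w.
by rewrite -(gK w) -(iso_tup bf h).
Qed.
Lemma Psing_iso A B : iso A B -> Psing A -> Psing B.
Proof.
case=> f [bf h] [x [h1 h2]]; have [g fK gK] := bf.
exists (f x); rewrite /isP -!(iso_tup bf h); split=> // w.
by rewrite -(gK w) -(iso_tup bf h).
Qed.
Lemma geC_iso A B j : iso A B -> geC A j -> geC B j.
Proof.
case=> f [bf h] [s [h1 h2 h3]]; exists (map f s); split.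
- rewrite map_inj_uniq //; exact: bij_inj.
- by rewrite size_map.
- apply/allP => y /mapP [x hx ->]; rewrite -(iso_tup bf h); exact: (allP h3).
Qed.

Lemma Asing_mk Z : Asing (mk Z) <-> exists x, pcol Z x = 0 /\ forall w, ~~ prel Z x w.
Proof. split; case=> x [h1 h2]; exists x; split=> //; by apply/eqP. Qed.
Lemma Psing_mk Z : WF Z -> (Psing (mk Z) <-> exists x, pcol Z x = 3 /\ forall w, ~~ prel Z x w).
Proof.
move=> wf; split; case=> x [h1 h2]; exists x; split=> //.
- move: h1; rewrite /isP /mk /= => h1; have := wf_col wf x.
  move: h1; case: (pcol Z x) => [|[|[|[|c]]]] //=; lia.
- by rewrite /isP /mk /= h1.
Qed.

Lemma Asing_K a : Asing (KK a) <-> a != 0.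
Proof.
rewrite /KK Asing_mk; case: a => [|[|n]] /=; split => //.
- case=> x [h1 h2]; have hj : x %% 6 < 6 by exact: (@ltn_pmod x 6 isT).
  move: h1 (h2 x.+1); rewrite eqxx andbT /relT.
  by case: (x %% 6) hj => [|[|[|[|[|[|r]]]]]].
- move=> _; exists 5; by split.
- move=> _; have e1 : 0 + n + 6 * 0 + 2 = n.+2 by lia.
  have c1 := ext_col_new Z0 0 n 0 (j:=2) isT; rewrite e1 in c1.
  have r1 : forall w, prel (ext Z0 0 n) (n.+2) w = relpat 2 && (w == (n.+2).+1).
    by move=> w; have := ext_rel_new Z0 0 n 0 (j:=2) w isT; rewrite e1.
  exists (n.+2); split; first exact: c1.
  by move=> w; move: (r1 w) => /= ->.
Qed.

Lemma Psing_K a : Psing (KK a) <-> a != 1.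
Proof.
rewrite /KK Psing_mk; last exact: Kp_WF.
case: a => [|[|n]] /=; split => //.
- move=> _; exists 5; by split.
- case=> x [h1 h2]; have hj : x %% 6 < 6 by exact: (@ltn_pmod x 6 isT).
  move: h1 (h2 x.+1); rewrite eqxx andbT /relT.
  by case: (x %% 6) hj => [|[|[|[|[|[|r]]]]]].
- move=> _; have e1 : 0 + n + 6 * 0 + 5 = n + 5 by lia.
  have c1 := ext_col_new Z0 0 n 0 (j:=5) isT; rewrite e1 in c1.
  have r1 : forall w, prel (ext Z0 0 n) (n + 5) w = relpat 5 && (w == (n + 5).+1).
    by move=> w; have := ext_rel_new Z0 0 n 0 (j:=5) w isT; rewrite e1.
  exists (n + 5); split; first exact: c1.
  by move=> w; move: (r1 w) => /= ->.
Qed.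

Lemma geC_Tinf t j : geC (mk (Tinf t)) j.
Proof.
exists (map (fun i => 6 * i) (iota 0 j)); split.
- rewrite map_inj_uniq ?iota_uniq // => x y; lia.
- by rewrite size_map size_iota.
- apply/allP => y /mapP [x _ ->]; rewrite /mk /=.
  by have -> : (6 * x) %% 6 = 0 by lia.
Qed.

Lemma geC_ext n j : geC (mk (ext Z0 0 n)) j <-> j <= n.
Proof.
split.
- case=> s [h1 <- h3]; rewrite -(size_iota 0 n); apply: uniq_leq_size => // x hx.
  have hc : pcol (ext Z0 0 n) x = 1 by apply/eqP; exact: (allP h3).
  by rewrite mem_iota /= add0n; have := ext_C hc.
- move=> h; exists (iota 0 j); split; first exact: iota_uniq.
  + by rewrite size_iota.
  + apply/allP => x; rewrite mem_iota /= add0n => hx; rewrite /mk /=.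
    by have -> : x < n by lia.
Qed.

Lemma geC_K a j : geC (KK a) j <-> (if a is n.+2 then j <= n else True).
Proof.
case: a => [|[|n]] /=; try (split=> // _; exact: geC_Tinf).
exact: geC_ext.
Qed.

Lemma KK_family : is_family KK.
Proof.
move=> a b h; have h' := iso_sym h.
case: a b h h' => [|[|n]] [|[|m]] h h' //.
- by have := proj1 (Asing_K 0) (Asing_iso h' (proj2 (Asing_K 1) isT)).
- by have := proj1 (Asing_K 0) (Asing_iso h' (proj2 (Asing_K m.+2) isT)).
- by have := proj1 (Asing_K 0) (Asing_iso h (proj2 (Asing_K 1) isT)).
- by have := proj1 (Psing_K 1) (Psing_iso h' (proj2 (Psing_K m.+2) isT)).
- by have := proj1 (Asing_K 0) (Asing_iso h (proj2 (Asing_K n.+2) isT)).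
- by have := proj1 (Psing_K 1) (Psing_iso h (proj2 (Psing_K n.+2) isT)).
- case: (ltngtP n m) => hnm; last by rewrite hnm.
  + have := proj1 (geC_K n.+2 m) (geC_iso h' (proj2 (geC_K m.+2 m) (leqnn m))) => /=; lia.
  + have := proj1 (geC_K m.+2 n) (geC_iso h (proj2 (geC_K n.+2 n) (leqnn n))) => /=; lia.
Qed.


Definition geCb (A : structure ar4) j u :=
  exists s, [/\ uniq s, size s = j & all (fun x => (x <= u) && A i1 (tup x x)) s].

Definition Req2 (a r u : nat) (A : structure ar4) : Prop :=
  match a with
  | 0 => r <= u /\ (A i0 (tup r r) -> exists2 w, w <= u & A i3 (tup r w))
  | 1 => r <= u /\ (isP A r -> exists2 w, w <= u & A i3 (tup r w))
  | n.+2 => r <= u /\ geCb A n u /\ ~ geCb A n.+1 r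
  end.

Definition Pr (a : nat) (A : structure ar4) : Prop :=
  match a with
  | 0 => ~ Asing A
  | 1 => ~ Psing A
  | n.+2 => geC A n /\ ~ geC A n.+1
  end.

Lemma geCb_restr A B j u v : restr_eq u A B -> v <= u -> geCb A j v -> geCb B j v.
Proof.
move=> h hv [s [h1 h2 h3]]; exists s; split=> //; apply/allP => x hx.
case/andP: (allP h3 x hx) => hxv hc; rewrite hxv /=.
by rewrite -(restr_tup _ h) //; lia.
Qed.

Lemma geCb_geC A j u : geCb A j u -> geC A j.
Proof. case=> s [h1 h2 h3]; exists s; split=> //; apply/allP => x hx; by case/andP: (allP h3 x hx). Qed.

Lemma geC_geCb A j : geC A j -> exists u, forall v, u <= v -> geCb A j v.
Proof.
case=> s [h1 h2 h3]; exists (foldr maxn 0 s) => v hv; exists s; split=> //.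
apply/allP => x hx; rewrite (allP h3 x hx) andbT.
suff : x <= foldr maxn 0 s by lia.
elim: s hx {h1 h2 h3 hv} => [|y s IH] //=; rewrite in_cons => /orP [/eqP ->|h]; first by lia.
have := IH h; lia.
Qed.

Lemma R1_2 a r u A B : restr_eq u A B -> Req2 a r u A -> Req2 a r u B.
Proof.
move=> h; case: a => [|[|n]] /=.
- case=> hr H; split=> // hA; rewrite -(restr_tup _ h) // in hA.
  case: (H hA) => w hw hw'; exists w => //; by rewrite -(restr_tup _ h).
- case=> hr H; split=> // hA; rewrite /isP -!(restr_tup _ h) // in hA.
  case: (H hA) => w hw hw'; exists w => //; by rewrite -(restr_tup _ h).
- case=> hr [h1 h2]; split=> //; split; first exact: geCb_restr h (leqnn u) h1.
  move=> h3; apply: h2; exact: geCb_restr (restr_eq_sym h) hr h3.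
Qed.

Lemma R2_2 a r u v A : u <= v -> Req2 a r u A -> Req2 a r v A.
Proof.
move=> huv; case: a => [|[|n]] /=.
- case=> hr H; split; first by lia.
  move=> hA; case: (H hA) => w hw hw'; exists w => //; lia.
- case=> hr H; split; first by lia.
  move=> hA; case: (H hA) => w hw hw'; exists w => //; lia.
- case=> hr [[s [h1 h2 h3]] h4]; split; first by lia.
  split=> //; exists s; split=> //; apply/allP => x hx.
  case/andP: (allP h3 x hx) => hxu ->; rewrite andbT; lia.
Qed.

Lemma Req_Pr a A : (forall r, exists u, Req2 a r u A) <-> Pr a A.
Proof.
case: a => [|[|n]] /=.
- split.
  + move=> H [x [h1 h2]]; case: (H x) => u [_ h]; case: (h h1) => w _ hw.
    by move: (h2 w); rewrite hw.
  + move=> hn r; case: (boolP (A i0 (tup r r))) => hr.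
    * have [w hw] : exists w, A i3 (tup r w).
        apply: NNPP => h; apply: hn; exists r; split=> // w; apply/negP => hw; apply: h; by exists w.
      exists (maxn r w); split; first by lia.
      move=> _; exists w => //; lia.
    * exists r; split=> //; by rewrite (negbTE hr).
- split.
  + move=> H [x [h1 h2]]; case: (H x) => u [_ h]; case: (h h1) => w _ hw.
    by move: (h2 w); rewrite hw.
  + move=> hn r; case: (boolP (isP A r)) => hr.
    * have [w hw] : exists w, A i3 (tup r w).
        apply: NNPP => h; apply: hn; exists r; split=> // w; apply/negP => hw; apply: h; by exists w.
      exists (maxn r w); split; first by lia.
      move=> _; exists w => //; lia.
    * exists r; split=> //; by rewrite (negbTE hr).
- split.
  + move=> H; split.
    * case: (H 0) => u [_ [h _]]; exact: geCb_geC h.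
    * move=> h; case: (geC_geCb h) => u hu; case: (H u) => v [_ [_ h2]].
      apply: h2; exact: hu.
  + case=> h1 h2 r; case: (geC_geCb h1) => u hu; exists (maxn r u); split; first by lia.
    split; first by apply: hu; lia.
    move=> h; apply: h2; exact: geCb_geC h.
Qed.

Lemma Pr_iso a A B : iso A B -> Pr a A -> Pr a B.
Proof.
move=> h; have h' := iso_sym h; case: a => [|[|n]] /=.
- move=> hn hb; apply: hn; exact: Asing_iso h' hb.
- move=> hn hb; apply: hn; exact: Psing_iso h' hb.
- case=> h1 h2; split; first exact: geC_iso h h1.
  move=> h3; apply: h2; exact: geC_iso h' h3.
Qed.

Lemma Pr_K a b : Pr a (KK b) <-> a = b.
Proof.
split; last first.
- move=> <-; case: a => [|[|n]] /=.
  + by move=> /(proj1 (Asing_K 0)).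
  + by move=> /(proj1 (Psing_K 1)).
  + split; first by apply: (proj2 (geC_K n.+2 n)) => /=.
    by move=> /(proj1 (geC_K n.+2 n.+1)) /=; lia.
- case: a => [|[|n]] /=.
  + case: b => [|b] h //; case: h; exact: (proj2 (Asing_K b.+1)).
  + case: b => [|[|b]] h //; case: h; [exact: (proj2 (Psing_K 0)) | exact: (proj2 (Psing_K b.+2))].
  + case=> /(proj1 (geC_K b n)) h1 h2.
    have h2' : ~ (if b is m.+2 then n.+1 <= m else True) by move=> h; apply: h2; apply/(proj2 (geC_K b n.+1)).
    clear h2; case: b h1 h2' => [|[|m]] //= h1 h2'.
    by have -> : n = m by lia.
Qed.

Theorem KK_PL : PL_learnable KK.
Proof.
apply: (@GD_PL _ _ _ KK Req2).
- exact: R1_2.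
- exact: R2_2.
- move=> A [b hb] a; rewrite Req_Pr; split.
  + move=> h; have e : a = b by apply: KK_family; exact: iso_trans h hb.
    subst b; apply/Pr_iso; first exact: iso_sym hb.
    by apply/Pr_K.
  + move=> h; have e : a = b by apply/(Pr_K a b); exact: Pr_iso hb h.
    subst b; exact: iso_sym.
Qed.


Definition gad (t : bool) (j : nat) : nat :=
  match j with 0 => 1 | 1 => tc t | 2 => 2 | 3 => nc t | 4 => nc t | 5 => 2 | _ => 1 end.

Ltac ifs := repeat (first [rewrite ifT; [|by lia] | rewrite ifF; [|by lia]]).

Section Steer.
Variables (Z : pre) (s : nat) (t : bool).
Definition need e := (pcol Z e == tc t) && ~~ has (prel Z e) (iota 0 s.+1).

Definition steer : pre :=
  Pre (fun x => if x <= s then pcol Z x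
                else if x <= s.*2.+1 then (if need (x - s.+1) then 2 else 1)
                else gad t (x - s.*2.+2))
      (fun x w => if x <= s then (if w <= s then prel Z x w else need x && (w == x + s.+1))
                  else ((x == s.*2 + 3) && (w == s.*2 + 4)) || ((x == s.*2 + 6) && (w == s.*2 + 7))).

Hypothesis pw : pwf Z s.+1.

Lemma tc03 : (tc t == 0) || (tc t == 3). Proof. by case: t. Qed.
Lemma nc03 : (nc t == 0) || (nc t == 3). Proof. by case: t. Qed.

Lemma steer_WF : WF steer.
Proof.
case: pw => p1 [p2 [p3 [p4 [p5 p6]]]].
apply: WF_of => /=.
- move=> x; case: ifP => h1; first by apply: p1; lia.
  case: ifP => h2; first by case: (need _).
  case: (x - s.*2.+2) => [|[|[|[|[|[|j]]]]]] //=; by case: t.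
- move=> x; case: ifP => h1.
  + move=> h; case: (p2 x h1 h) => e he hr; exists e => //.
    rewrite /= ifT; last by lia.
    exact: hr.
  + case: ifP => h2.
    * case E: (need (x - s.+1)) => // _; exists (x - s.+1); first by lia.
      rewrite /= ifT; last by lia.
      rewrite E /=; apply/eqP; lia.
    * have hgad : forall j, gad t j = 2 -> (j == 2) || (j == 5).
        by case: t => [] [|[|[|[|[|[|j]]]]]].
      move=> h; have := hgad _ h => /orP [] /eqP hj.
      - exists (s.*2 + 3); first by lia.
        rewrite /= ifF; last by lia.
        apply/orP; left; apply/andP; split=> //; apply/eqP; lia.
      - exists (s.*2 + 6); first by lia.
        rewrite /= ifF; last by lia.
        apply/orP; right; apply/andP; split=> //; apply/eqP; lia.
- move=> x w; case: ifP => h1.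
  + case: ifP => h2; first by apply: p3; lia.
    by case/andP => /andP [/eqP -> _] _; exact: tc03.
  + case/orP => /andP [/eqP hx _]; subst x; ifs.
    * have -> : s.*2 + 3 - s.*2.+2 = 1 by lia. exact: tc03.
    * have -> : s.*2 + 6 - s.*2.+2 = 4 by lia. exact: nc03.
- move=> x w; case: ifP => h1.
  + case: ifP => h2; first by move=> h; ifs; apply: (p4 x w) => //; lia.
    case/andP => hn /eqP hw; subst w; ifs.
    have -> : x + s.+1 - s.+1 = x by lia.
    by rewrite hn.
  + case/orP => /andP [_ /eqP hw]; subst w; ifs.
    * by have -> : s.*2 + 4 - s.*2.+2 = 2 by lia.
    * by have -> : s.*2 + 7 - s.*2.+2 = 5 by lia.
- move=> x w w'; case: ifP => h1.
  + case: ifP => h2; case: ifP => h3.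
    * apply: p5; lia.
    * move=> hr /andP [/andP [_ hn] _]; case/hasP: hn; exists w => //.
      rewrite mem_iota; lia.
    * move=> /andP [/andP [_ hn] _] hr; case/hasP: hn; exists w' => //.
      rewrite mem_iota; lia.
    * by move=> /andP [_ /eqP ->] /andP [_ /eqP ->].
  + by case/orP => /andP [/eqP hx /eqP ->] /orP [] /andP [/eqP hx' /eqP ->]; lia.
- move=> x x' w; case: (leqP x s) => h1; case: (leqP x' s) => h2; case: (leqP w s) => h3; ifs.
  + apply: p6; lia.
  + by move=> /andP [_ /eqP hw] /andP [_ /eqP hw']; lia.
  + by move=> _ /orP [] /andP [_ /eqP]; lia.
  + by move=> /andP [_ /eqP hw] /orP [] /andP [_ /eqP]; lia.
  + by move=> /orP [] /andP [_ /eqP]; lia.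
  + by move=> /orP [] /andP [_ /eqP hw] /andP [_ /eqP]; lia.
  + by move=> /orP [] /andP [/eqP hx /eqP hw] /orP [] /andP [/eqP hx' /eqP hw']; lia.
  + by move=> /orP [] /andP [/eqP hx /eqP hw] /orP [] /andP [/eqP hx' /eqP hw']; lia.
Qed.

Lemma steer_agree_col x : x <= s -> pcol steer x = pcol Z x.
Proof. by move=> h /=; rewrite h. Qed.
Lemma steer_agree_rel x w : x <= s -> w <= s -> prel steer x w = prel Z x w.
Proof. by move=> h h' /=; rewrite h h'. Qed.

Lemma steer_match x : x <= s -> pcol Z x = tc t -> exists2 w, w <= s.*2 + 7 & prel steer x w.
Proof.
move=> hx hc; case: (boolP (has (prel Z x) (iota 0 s.+1))) => hh.
- case/hasP: hh => w; rewrite mem_iota => hw hr; exists w; first by lia.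
  rewrite /= hx ifT //; lia.
- exists (x + s.+1); first by lia.
  rewrite /= hx ifF; last by lia.
  by rewrite /need hc eqxx hh eqxx.
Qed.

Lemma steer_gadC : pcol steer (s.*2 + 2) = 1.
Proof. rewrite /= ifF; last by lia. rewrite ifF; last by lia. by have -> : s.*2 + 2 - s.*2.+2 = 0 by lia. Qed.
Lemma steer_gadT : pcol steer (s.*2 + 3) = tc t /\ prel steer (s.*2 + 3) (s.*2 + 4).
Proof.
split.
- rewrite /= ifF; last by lia. rewrite ifF; last by lia. by have -> : s.*2 + 3 - s.*2.+2 = 1 by lia.
- rewrite /= ifF; last by lia. by rewrite !eqxx.
Qed.
Lemma steer_gadN : pcol steer (s.*2 + 6) = nc t /\ prel steer (s.*2 + 6) (s.*2 + 7).
Proof.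
split.
- rewrite /= ifF; last by lia. rewrite ifF; last by lia. by have -> : s.*2 + 6 - s.*2.+2 = 4 by lia.
- rewrite /= ifF; last by lia. by rewrite !eqxx orbT.
Qed.
Lemma steer_gadS : pcol steer (s.*2 + 5) = nc t /\ forall w, ~~ prel steer (s.*2 + 5) w.
Proof.
split.
- rewrite /= ifF; last by lia. rewrite ifF; last by lia. by have -> : s.*2 + 5 - s.*2.+2 = 3 by lia.
- move=> w; rewrite /= ifF; last by lia.
  apply/negP => /orP [] /andP [/eqP h _]; lia.
Qed.

Lemma steer_frozen x : x <= s -> pcol Z x != tc t -> (forall w, w <= s -> ~~ prel Z x w) ->
  forall w, ~~ prel steer x w.
Proof.
move=> hx hc hw w; rewrite /= hx; case: ifP => h; first exact: hw.
by rewrite /need (negbTE hc).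
Qed.
End Steer.


Definition agree (Z Z' : pre) s :=
  (forall x, x <= s -> pcol Z x = pcol Z' x) /\
  (forall x w, x <= s -> w <= s -> prel Z x w = prel Z' x w).

Lemma agree_trans Z1 Z2 Z3 s : agree Z1 Z2 s -> agree Z2 Z3 s -> agree Z1 Z3 s.
Proof. case=> h1 h2 [h3 h4]; split=> *; [rewrite h1 ?h3 // | rewrite h2 ?h4 //]. Qed.
Lemma agree_mon Z1 Z2 s s' : s <= s' -> agree Z1 Z2 s' -> agree Z1 Z2 s.
Proof. move=> hs [h1 h2]; split=> *; [apply: h1 | apply: h2]; lia. Qed.
Lemma agree_sym Z1 Z2 s : agree Z1 Z2 s -> agree Z2 Z1 s.
Proof. case=> h1 h2; split=> *; [rewrite h1 // | rewrite h2 //]. Qed.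

Lemma agree_restr Z Z' s : agree Z Z' s -> restr_eq s (mk Z) (mk Z').
Proof.
case=> h1 h2 i u hu; rewrite /mk; case: ifP => _; first by rewrite h1.
by rewrite h2.
Qed.

Lemma ext_agree Z s e : agree Z (ext Z s.+1 e) s.
Proof.
split=> [x hx|x w hx hw] /=; ifs => //.
by rewrite ltnS hw.
Qed.

Lemma steer_agree Z s t : agree Z (steer Z s t) s.
Proof. split=> [x hx|x w hx hw]; [by rewrite steer_agree_col | by rewrite steer_agree_rel]. Qed.

Lemma cntC_le Z b : cntC Z b <= b.
Proof. by rewrite /cntC; have := count_size (fun y => pcol Z y == 1) (iota 0 b); rewrite size_iota. Qed.

Lemma Z0_WF : WF Z0.
Proof. by apply: WF_of. Qed.

Lemma WF_pwf Z b : WF Z -> pwf Z b. Proof. by move=> h; apply: h. Qed.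

Section Cons.
Variable G : structure ar4 -> nat -> nat.
Hypothesis Gc : continuous_on_LD KK G.
Hypothesis Gr : forall A B, LD KK A -> LD KK B -> (iso A B <-> E3 (G A) (G B)).
Variables (t : bool) (m : nat).
Definition idx := if t then 0 else 1.
Definition q := column (G (KK idx)) m.
Hypothesis HJ : forall N, exists n, N <= n /\ ~ E0 (column (G (KK n.+2)) m) q.

Definition chn (s : nat) := epsilon (inhabits 0) (fun n => s < n /\ ~ E0 (column (G (KK n.+2)) m) q).
Definition fx (Z : pre) (s : nat) := ext Z s.+1 (chn s - cntC Z s.+1).
Definition chn' Z s N := epsilon (inhabits 0)
  (fun n' => N <= n' /\ G (mk (fx Z s)) (pair m n') <> q n').
Definition chs Z s N := epsilon (inhabits 0) (fun s0 => forall B, LD KK B -> restr_eq s0 (mk (fx Z s)) B ->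
   G B (pair m (chn' Z s N)) = G (mk (fx Z s)) (pair m (chn' Z s N))).
Definition s1 Z s N := maxn (chs Z s N) s.+1.
Definition stp N (st : pre * nat) :=
  (steer (fx st.1 st.2) (s1 st.1 st.2 N) t, (s1 st.1 st.2 N).*2 + 7).
Fixpoint st N := match N with 0 => (Z0, 0) | N'.+1 => stp N' (st N') end.

Lemma chnP s : s < chn s /\ ~ E0 (column (G (KK (chn s).+2)) m) q.
Proof.
rewrite /chn; apply: (epsilon_spec (inhabits 0) (fun n => s < n /\ ~ E0 (column (G (KK n.+2)) m) q)).
case: (HJ s.+1) => n [h1 h2]; by exists n.
Qed.

Lemma fx_WF Z s : WF Z -> WF (fx Z s).
Proof. move=> h; apply: ext_WF; exact: h. Qed.

Lemma fx_iso Z s : WF Z -> iso (mk (fx Z s)) (KK (chn s).+2).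
Proof.
move=> wf; apply: kind_iso; [exact: fx_WF | exact: (Kp_WF (chn s).+2) |].
move=> c r hc; rewrite /Kp /fx.
case: c hc => [|c] hc.
- rewrite !ext_kind0; have := cntC_le Z s.+1; have := (chnP s).1.
  have -> : cntC Z0 0 = 0 by [].
  lia.
- have hc' : 1 <= c.+1 <= 4 by lia.
  split=> _; exact: ext_kind_all.
Qed.

Lemma fx_LD Z s : WF Z -> LD KK (mk (fx Z s)).
Proof. move=> wf; exists (chn s).+2; exact: fx_iso. Qed.

Lemma LD_KK a : LD KK (KK a). Proof. exists a; exact: iso_refl. Qed.

Lemma chn'P Z s N : WF Z -> N <= chn' Z s N /\ G (mk (fx Z s)) (pair m (chn' Z s N)) <> q (chn' Z s N).
Proof.
move=> wf; rewrite /chn'.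
apply: (epsilon_spec (inhabits 0) (fun n' => N <= n' /\ G (mk (fx Z s)) (pair m n') <> q n')).
have h3 : E3 (G (mk (fx Z s))) (G (KK (chn s).+2)).
  by apply: (proj1 (Gr (fx_LD s wf) (LD_KK _))); exact: fx_iso.
have hne : ~ E0 (column (G (mk (fx Z s))) m) q.
  move=> h; apply: (chnP s).2; exact: E0_trans (E0_sym (h3 m)) h.
case: (notE0 hne N) => n [h1 h2]; by exists n.
Qed.

Lemma chsP Z s N : WF Z -> forall B, LD KK B -> restr_eq (chs Z s N) (mk (fx Z s)) B ->
   G B (pair m (chn' Z s N)) = G (mk (fx Z s)) (pair m (chn' Z s N)).
Proof.
move=> wf; rewrite /chs.
apply: (epsilon_spec (inhabits 0) (fun s0 => forall B, LD KK B -> restr_eq s0 (mk (fx Z s)) B ->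
   G B (pair m (chn' Z s N)) = G (mk (fx Z s)) (pair m (chn' Z s N)))).
exact: Gc (fx_LD s wf) _.
Qed.

Lemma st_inv N : WF (st N).1 /\ N <= (st N).2.
Proof.
elim: N => [|N [wf hN]] /=; first by split=> //; exact: Z0_WF.
split.
- apply: steer_WF; apply: WF_pwf; exact: fx_WF.
- rewrite /s1; lia.
Qed.

Lemma st_lt N : (st N).2 < (st N.+1).2.
Proof. rewrite /= /s1; lia. Qed.

Lemma st_mono M N : M <= N -> (st M).2 <= (st N).2.
Proof.
move=> h; rewrite -(subnKC h); elim: (N - M) => [|d IH]; first by rewrite addn0.
rewrite addnS; have := st_lt (M + d); lia.
Qed.

Lemma step_agree N : agree (st N).1 (st N.+1).1 (st N).2.
Proof.
rewrite /=; apply: agree_trans (ext_agree _ _ _) _.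
apply: agree_mon (steer_agree _ _ _); rewrite /s1; lia.
Qed.

Lemma agree_MN M N : M <= N -> agree (st M).1 (st N).1 (st M).2.
Proof.
move=> h; rewrite -(subnKC h); elim: (N - M) => [|d IH].
- rewrite addn0; split=> //.
- rewrite addnS; apply: agree_trans IH _; apply: agree_mon (step_agree _).
  exact: st_mono (leq_addr _ _).
Qed.

Definition y : pre := Pre (fun x => pcol (st x).1 x) (fun x w => prel (st (maxn x w)).1 x w).

Lemma y_agree N : agree y (st N).1 (st N).2.
Proof.
have hs : forall K, K <= (st K).2 by move=> K; exact: (st_inv K).2.
split.
- move=> x hx /=; case: (leqP x N) => h.
  + exact: (agree_MN h).1 _ (hs x).
  + apply/esym; apply: (agree_MN (ltnW h)).1 _ hx.
- move=> x w hx hw /=; case: (leqP (maxn x w) N) => h.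
  + apply: (agree_MN h).2; have := hs (maxn x w); lia.
  + apply/esym; apply: (agree_MN (ltnW h)).2 => //.
Qed.

Lemma yN x : exists N, x <= (st N).2.
Proof. exists x; exact: (st_inv x).2. Qed.

Lemma y_WF : WF y.
Proof.
have hs : forall K, K <= (st K).2 by move=> K; exact: (st_inv K).2.
have yc : forall K x, x <= (st K).2 -> pcol y x = pcol (st K).1 x.
  by move=> K x hx; exact: (y_agree K).1.
have yr : forall K x w, x <= (st K).2 -> w <= (st K).2 -> prel y x w = prel (st K).1 x w.
  by move=> K x w hx hw; exact: (y_agree K).2.
apply: WF_of.
- move=> x; rewrite (yc x x (hs x)); exact: (wf_col (st_inv x).1 x).
- move=> x; rewrite (yc x x (hs x)) => h; case: (wf_part (st_inv x).1 h) => e he hr.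
  exists e => //; rewrite (yr x) //; have := hs x; lia.
- move=> x w; set K := maxn x w; have hx : x <= (st K).2 by have := hs K; lia.
  have hw : w <= (st K).2 by have := hs K; lia.
  rewrite (yr K) // (yc K) //; move=> h; have := wf_base (st_inv K).1 h; exact: id.
- move=> x w; set K := maxn x w; have hx : x <= (st K).2 by have := hs K; lia.
  have hw : w <= (st K).2 by have := hs K; lia.
  rewrite (yr K) // (yc K) //; move=> h; have := wf_W (st_inv K).1 h; exact: id.
- move=> x w w'; set K := maxn x (maxn w w').
  have hx : x <= (st K).2 by have := hs K; lia.
  have hw : w <= (st K).2 by have := hs K; lia.
  have hw' : w' <= (st K).2 by have := hs K; lia.
  rewrite (yr K x w) // (yr K x w') //; move=> h h'; have := wf_u1 (st_inv K).1 h h'; exact: id.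
- move=> x x' w; set K := maxn w (maxn x x').
  have hx : x <= (st K).2 by have := hs K; lia.
  have hw : w <= (st K).2 by have := hs K; lia.
  have hx' : x' <= (st K).2 by have := hs K; lia.
  rewrite (yr K x w) // (yr K x' w) //; move=> h h'; have := wf_u2 (st_inv K).1 h h'; exact: id.
Qed.

Lemma kd_C (Y : pre) x : pcol Y x = 1 -> kd Y x = 0.
Proof. by rewrite /kd => ->. Qed.
Lemma kd_m (Y : pre) x c : (c == 0) || (c == 3) -> pcol Y x = c -> (exists w, prel Y x w) -> kd Y x = kdm c.
Proof.
move=> hc hx hm; have hm' : matched Y x by apply/asbP.
rewrite /kd hx hm' /kdm; by case/orP: hc => /eqP ->.
Qed.
Lemma kd_s (Y : pre) x c : (c == 0) || (c == 3) -> pcol Y x = c -> (forall w, ~~ prel Y x w) -> kd Y x = kds c.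
Proof.
move=> hc hx hm; have hm' : matched Y x = false.
  by apply/asbP => -[w hw]; move: (hm w); rewrite hw.
rewrite /kd hx hm' /kds; by case/orP: hc => /eqP ->.
Qed.
Lemma kd_is_s (Y : pre) x c : pcol Y x <= 3 -> (c == 0) || (c == 3) -> kd Y x = kds c ->
  pcol Y x = c /\ forall w, ~~ prel Y x w.
Proof.
move=> hle hc; rewrite /kd /kds; case E: (matched Y x); move: hle;
  case: (pcol Y x) => [|[|[|[|p]]]] /=; case/orP: hc => /eqP -> //=.
all: try (move=> _ _; split=> // w; apply/negP => hw; move: E; rewrite /matched;
  by case: asbP => // -[]; exists w).
Qed.

Lemma hs_st K : K <= (st K).2. Proof. exact: (st_inv K).2. Qed.

Lemma y_no_tsingle x : kd y x != kds (tc t).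
Proof.
apply/negP => /eqP h; have [hc hw] := kd_is_s (wf_col y_WF x) (tc03 t) h.
set N := x; set Z := (st N).1; set s := (st N).2.
have hxs : x <= s by exact: hs_st.
have hcf : pcol (fx Z s) x = tc t.
  rewrite -(ext_agree Z s _).1 // -hc; apply/esym; exact: (y_agree N).1.
have hS : s < s1 Z s N by rewrite /s1; lia.
have hxS : x <= s1 Z s N by lia.
have [w hw1 hw2] := steer_match hxS hcf.
have e1 : prel y x w = prel (st N.+1).1 x w.
  apply: (y_agree N.+1).2; rewrite /= -/Z -/s; lia.
have e2 : (st N.+1).1 = steer (fx Z s) (s1 Z s N) t by [].
by move: (hw w); rewrite e1 e2 hw2.
Qed.

Lemma frozen M L : L <= (st M).2 -> pcol (st M).1 L = nc t -> (forall w, ~~ prel (st M).1 L w) ->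
  forall K, M <= K -> pcol (st K).1 L = nc t /\ forall w, w <= (st K).2 -> ~~ prel (st K).1 L w.
Proof.
move=> hL hc hw K hK; rewrite -(subnKC hK); elim: (K - M) => [|d [IH1 IH2]].
- by rewrite addn0; split=> // w _; exact: hw.
- rewrite addnS; set Z := (st (M + d)).1; set s := (st (M + d)).2.
  have hmn : M <= M + d by lia.
  have hLs : L <= s by have := st_mono hmn; lia.
  have hcf : pcol (fx Z s) L = nc t by rewrite -(ext_agree Z s _).1.
  have hwf : forall w, ~~ prel (fx Z s) L w.
    move=> w; rewrite /fx /= ifT; last by lia.
    case: (leqP w s) => h.
    + rewrite ltnS h /=; exact: IH2.
    + by have -> : (w < s.+1) = false by lia.
  have hS : s < s1 Z s (M + d) by rewrite /s1; lia.
  have e2 : (st (M + d).+1).1 = steer (fx Z s) (s1 Z s (M + d)) t by [].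
  split.
  + rewrite e2 steer_agree_col //; lia.
  + move=> w _; rewrite e2; apply: steer_frozen.
    * lia.
    * by rewrite hcf; case: t.
    * move=> w' _; exact: hwf.
Qed.

Lemma y_kinds c : c < 5 -> c != kds (tc t) -> forall M, exists x, M <= x /\ kd y x = c.
Proof.
move=> hc hne M.
set Z := (st M).1; set s := (st M).2; set S := s1 Z s M.
have hMs : M <= s by exact: hs_st.
have hS : s < S by rewrite /S /s1; lia.
have hs' : (st M.+1).2 = S.*2 + 7 by [].
have hZ' : (st M.+1).1 = steer (fx Z s) S t by [].
have yc : forall L, L <= S.*2 + 7 -> pcol y L = pcol (steer (fx Z s) S t) L.
  by move=> L hL; rewrite -hZ'; apply: (y_agree M.+1).1; rewrite hs'.
have yr : forall L w, L <= S.*2 + 7 -> w <= S.*2 + 7 -> prel y L w = prel (steer (fx Z s) S t) L w.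
  by move=> L w hL hw; rewrite -hZ'; apply: (y_agree M.+1).2; rewrite hs'.
have kC : kd y (S.*2 + 2) = 0 by apply: kd_C; rewrite yc ?steer_gadC //; lia.
have kT : kd y (S.*2 + 3) = kdm (tc t).
  apply: kd_m (tc03 t) _ _; first by rewrite yc ?(steer_gadT _ _ t).1 //; lia.
  exists (S.*2 + 4); rewrite yr ?(steer_gadT _ _ t).2 //; lia.
have kN : kd y (S.*2 + 6) = kdm (nc t).
  apply: kd_m (nc03 t) _ _; first by rewrite yc ?(steer_gadN _ _ t).1 //; lia.
  exists (S.*2 + 7); rewrite yr ?(steer_gadN _ _ t).2 //; lia.
have kS : kd y (S.*2 + 5) = kds (nc t).
  apply: kd_s (nc03 t) _ _; first by rewrite yc ?(steer_gadS _ _ t).1 //; lia.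
  have hfz := @frozen M.+1 (S.*2 + 5).
  rewrite hs' hZ' in hfz.
  have := hfz (ltac:(lia)) (steer_gadS _ _ t).1 (steer_gadS _ _ t).2 => {}hfz w.
  set K := maxn M.+1 (maxn (S.*2 + 5) w).
  have hK : K <= (st K).2 by exact: hs_st.
  have hK1 : S.*2 + 5 <= K by rewrite /K; lia.
  have hK2 : w <= K by rewrite /K; lia.
  have hK3 : M.+1 <= K by rewrite /K; lia.
  rewrite (y_agree K).2; first apply: (hfz K hK3).2.
  all: try lia.
have hM : forall L, M <= S.*2 + L by move=> L; lia.
case: t hne kT kN kS => /= hne kT kN kS;
  case: c hc hne => [|[|[|[|[|c]]]]] //= _ _.
all: first [ by exists (S.*2 + 2) | by exists (S.*2 + 3) | by exists (S.*2 + 5) | by exists (S.*2 + 6) ].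
Qed.

Lemma KK_idx : KK idx = mk (Tinf t). Proof. by rewrite /idx; case: t. Qed.

Lemma y_iso : iso (mk y) (KK idx).
Proof.
rewrite KK_idx; apply: kind_iso; [exact: y_WF | exact: Tinf_WF |].
move=> c r hc; case: (eqVneq c (kds (tc t))) => [->|hne].
- split; last by move=> h; case: (Tinf_kind_none h).
  by case=> x [h _]; move: (y_no_tsingle x); rewrite h eqxx.
- split=> _; last exact: rk_inf (y_kinds hc hne) r.
  exact: Tinf_kind.
Qed.

Lemma cons_false : False.
Proof.
have hyLD : LD KK (mk y) by exists idx; exact: y_iso.
have h3 : E3 (G (mk y)) (G (KK idx)) by apply: (proj1 (Gr hyLD (LD_KK idx))); exact: y_iso.
case: (h3 m) => N0 hN0.
set Z := (st N0).1; set s := (st N0).2.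
have wf : WF Z := (st_inv N0).1.
have [hn' hneq] := chn'P s N0 wf.
have hag : agree (fx Z s) y (s1 Z s N0).
  apply: agree_trans (steer_agree _ _ t) _; apply: agree_sym.
  apply: agree_mon (y_agree N0.+1); rewrite /= -/Z -/s; lia.
have hr : restr_eq (chs Z s N0) (mk (fx Z s)) (mk y).
  apply: agree_restr; apply: agree_mon hag; rewrite /s1; lia.
have e1 := chsP wf hyLD hr.
have e2 := hN0 _ hn'; rewrite /column in e2.
by apply: hneq; rewrite -e1 e2.
Qed.
End Cons.


Theorem KK_notE3 : ~ E_learnable E3 KK.
Proof.
case=> G [Gc Gr].
have hne : ~ E3 (G (KK 0)) (G (KK 1)).
  move=> h; have := KK_family (proj2 (Gr (KK 0) (KK 1) (LD_KK 0) (LD_KK 1)) h); done.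
have [m hm] : exists m, ~ E0 (column (G (KK 0)) m) (column (G (KK 1)) m).
  apply: NNPP => h; apply: hne => m; apply: NNPP => h2; apply: h; by exists m.
case: (classic (forall N, exists n, N <= n /\ ~ E0 (column (G (KK n.+2)) m) (column (G (KK 0)) m))) => H.
- exact: (@cons_false G Gc Gr true m H).
- apply: (@cons_false G Gc Gr false m) => N.
  have [N0 hN0] : exists N0, forall n, N0 <= n -> E0 (column (G (KK n.+2)) m) (column (G (KK 0)) m).
    apply: NNPP => h; apply: H => N'; apply: NNPP => h2; apply: h; exists N' => n hn.
    apply: NNPP => h3; apply: h2; exists n; split=> //.
  exists (maxn N N0); split; first lia.
  move=> h; apply: hm; apply: E0_trans (E0_sym (hN0 _ _)) h; lia.
Qed.

Theorem mainTheorem19 :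
  (forall (k : nat) (ar : 'I_k -> nat) (I : countType) (K : I -> structure ar),
      is_family K -> E_learnable E3 K -> PL_learnable K) /\
  (exists (k : nat) (ar : 'I_k -> nat) (I : countType) (K : I -> structure ar),
      is_family K /\ PL_learnable K /\ ~ E_learnable E3 K).
Proof.
split; first exact: part1.
exists 4, ar4, nat, KK; split; first exact: KK_family.
split; [exact: KK_PL | exact: KK_notE3].
Qed.
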